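(* Let $p_X=\sum_{j=1}^{N_r}m_j\delta_{x_j}$ with $m_j\ge 0$, $\sum_j m_j=1$, and $x_j$ the standard points. (a) If $r\notin\mathbb{N}$ (so $N_r=2n+2$), set $m_0:=0$ and $m_{2n+3}:=0$, and assume $m_{j-1}+m_j>0$ for all $j=1,\dots,2n+3$. Then for each $j=1,\dots,2n+1$, the map $x\mapsto i(x;p_X)$ is affine on $[x_j,x_{j+1}]$ with slope $$r\log\frac{m_{j-1}+m_j}{m_{j+1}+m_{j+2}}.$$ (b) If $r\in\mathbb{N}$ (so $N_r=n+1$) and all $m_j>0$, then for each $j=1,\dots,n$ the map $x\mapsto i(x;p_X)$ is affine on $[x_j,x_{j+1}]$ with slope $r\log(m_j/m_{j+1})$.
   Context: Fix $b>0$ and set $r:=1/(2b)$, $n:=\lfloor r\rfloor$. Consider the additive uniform noise channel $Y=X+N$ with $N\sim\mathrm{Uniform}(-b,b)$ independent of $X$, so the transition density is $p_N(y\mid x)=r\,\mathbf{1}_{x-b<y<x+b}$. For a probability distribution $p_X$ on $[0,1]$ the output density is $p_Y(y;p_X)=\int p_N(y\mid x)\,dp_X(x)$ and the marginal information density is $i(x;p_X)=\int p_N(y\mid x)\log\frac{p_N(y\mid x)}{p_Y(y;p_X)}\,dy$. Standard points: let $N_r=n+1$ if $r\in\mathbb{N}$ and $N_r=2n+2$ if $r\notin\mathbb{N}$. For $j=1,\dots,N_r$ set $x_j=(j-1)/n$ if $r\in\mathbb{N}$; if $r\notin\mathbb{N}$, set $x_j=(j-1)/(2r)$ for odd $j$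 and $x_j=1-(2n+2-j)/(2r)$ for even $j$ (these satisfy $0=x_1<x_2<\dots<x_{N_r}=1$). *)

(* Defs.v *)
From Stdlib Require Import Reals List.
From Coquelicot Require Import Coquelicot.
Open Scope R_scope.

Definition rr (b : R) : R := / (2 * b).

Definition nn (b : R) : nat := Z.to_nat (Int_part (rr b)).

Definition is_natR (x : R) : Prop := exists k : nat, x = INR k.

Definition sum1N (N : nat) (f : nat -> R) : R :=
  fold_right (fun j acc => f j + acc) 0 (List.seq 1 N).

Definition pN (b y x : R) : R :=
  if Rlt_dec (x - b) y then (if Rlt_dec y (x + b) then rr b else 0) else 0.

(* output density for the discrete input p_X = sum_{j=1}^N m_j delta_{xs j} *)
Definition pY (b : R) (N : nat) (xs m : nat -> R) (y : R) : R :=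
  sum1N N (fun j => m j * pN b y (xs j)).

(* marginal information density
   i(x; p_X) = int p_N(y|x) log (p_N(y|x) / p_Y(y)) dy ;
   the integrand vanishes outside (x-b, x+b), so we integrate over that interval. *)
Definition info (b : R) (N : nat) (xs m : nat -> R) (x : R) : R :=
  RInt (fun y => pN b y x * ln (pN b y x / pY b N xs m y)) (x - b) (x + b).

Definition xs_nat (b : R) (j : nat) : R := (INR j - 1) / INR (nn b).

Definition xs_nonnat (b : R) (j : nat) : R :=
  if Nat.odd j then (INR j - 1) / (2 * rr b)
  else 1 - (2 * INR (nn b) + 2 - INR j) / (2 * rr b).

(* m extended by zero outside 1..N (so m_0 = 0, m_{N+1} = 0) *)
Definition mext (N : nat) (m : nat -> R) (j : nat) : R :=
  if andb (Nat.leb 1 j) (Nat.leb j N) then m j else 0.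

Definition affine_on (f : R -> R) (a c s : R) : Prop :=
  exists c0 : R, forall x, a <= x <= c -> f x = c0 + s * x.

(* Main.v *)
Require Import Defs.
From Stdlib Require Import Reals List.
From Coquelicot Require Import Coquelicot.
From Stdlib Require Import Lra Lia Psatz ZArith.
Open Scope R_scope.

Lemma pN_hit b y X : X - b < y < X + b -> pN b y X = rr b.
Proof. intros [H1 H2]. unfold pN. destruct (Rlt_dec (X-b) y); [|lra].
  destruct (Rlt_dec y (X+b)); [reflexivity|lra]. Qed.

Lemma pN_miss b y X : y <= X - b \/ X + b <= y -> pN b y X = 0.
Proof. intros H. unfold pN. destruct (Rlt_dec (X-b) y); [|reflexivity].
  destruct (Rlt_dec y (X+b)); [lra|reflexivity]. Qed.

Definition dlt (i c : nat) : R := if Nat.eqb i c then 1 else 0.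

Lemma fold_ext (f g : nat -> R) l : (forall i, In i l -> f i = g i) ->
  fold_right (fun j acc => f j + acc) 0 l = fold_right (fun j acc => g j + acc) 0 l.
Proof. induction l as [|a l IH]; simpl; intros H; [reflexivity|].
 rewrite (H a (or_introl eq_refl)), IH; [reflexivity|]. intros i Hi; apply H; right; exact Hi. Qed.

Lemma fold_lin (m : nat -> R) r c1 c2 l :
  fold_right (fun j acc => m j * (r * (dlt j c1 + dlt j c2)) + acc) 0 l =
  r * (fold_right (fun j acc => m j * dlt j c1 + acc) 0 l
       + fold_right (fun j acc => m j * dlt j c2 + acc) 0 l).
Proof. induction l as [|a l IH]; simpl; [ring|]. rewrite IH. ring. Qed.

Lemma fold_dlt (m : nat -> R) c k : forall s,
  fold_right (fun j acc => m j * dlt j c + acc) 0 (seq s k) =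
  if andb (Nat.leb s c) (Nat.ltb c (s + k)) then m c else 0.
Proof.
  induction k as [|k IH]; intros s; cbn [seq fold_right].
  - destruct (Nat.leb_spec s c); destruct (Nat.ltb_spec c (s+0)); simpl; try lia; reflexivity.
  - rewrite IH. unfold dlt. destruct (Nat.eqb_spec s c).
    + subst. destruct (Nat.leb_spec (S c) c); [lia|].
      destruct (Nat.leb_spec c c); [|lia].
      destruct (Nat.ltb_spec c (c + S k)); [|lia]. simpl. ring.
    + destruct (Nat.leb_spec (S s) c); destruct (Nat.ltb_spec c (S s + k));
      destruct (Nat.leb_spec s c); destruct (Nat.ltb_spec c (s + S k)); simpl; try lia; ring.
Qed.

Lemma pY_two b N xs m y c1 c2 :
  (forall i, (1 <= i <= N)%nat -> pN b y (xs i) = rr b * (dlt i c1 + dlt i c2)) ->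
  pY b N xs m y = rr b * (mext N m c1 + mext N m c2).
Proof.
  intros H. unfold pY, sum1N.
  transitivity (fold_right (fun j acc => m j * (rr b * (dlt j c1 + dlt j c2)) + acc) 0 (seq 1 N)).
  { apply fold_ext. intros i Hi. apply in_seq in Hi. rewrite H; [reflexivity|lia]. }
  rewrite fold_lin, !fold_dlt. unfold mext.
  destruct (Nat.ltb_spec c1 (1+N)); destruct (Nat.leb_spec c1 N); try lia;
  destruct (Nat.ltb_spec c2 (1+N)); destruct (Nat.leb_spec c2 N); try lia; reflexivity.
Qed.

Lemma affine_core (G : R -> R) (b u v c1 c0 c2 : R) :
  0 < b -> u <= v -> v <= u + 2*b ->
  (forall y, u - b < y < v - b -> G y = c1) ->
  (forall y, v - b < y < u + b -> G y = c0) ->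
  (forall y, u + b < y < v + b -> G y = c2) ->
  forall x, u <= x <= v -> RInt G (x-b) (x+b) = c1*(v - x) + c0*(u+2*b-v) + c2*(x-u).
Proof.
  intros Hb Huv Hvu H1 H0 H2 x Hx.
  apply is_RInt_unique.
  assert (I1 : is_RInt G (x-b) (v-b) (c1*(v-x))).
  { eapply is_RInt_ext. 2: { replace (c1*(v-x)) with (scal ((v-b)-(x-b)) c1).
      apply (@is_RInt_const R_NormedModule). change (((v-b)-(x-b))*c1 = c1*(v-x)). ring. }
    intros y Hy. rewrite Rmin_left in Hy by lra. rewrite Rmax_right in Hy by lra.
    symmetry; apply H1; lra. }
  assert (I0 : is_RInt G (v-b) (u+b) (c0*(u+2*b-v))).
  { eapply is_RInt_ext. 2: { replace (c0*(u+2*b-v)) with (scal ((u+b)-(v-b)) c0).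
      apply (@is_RInt_const R_NormedModule). change (((u+b)-(v-b))*c0 = c0*(u+2*b-v)). ring. }
    intros y Hy. rewrite Rmin_left in Hy by lra. rewrite Rmax_right in Hy by lra.
    symmetry; apply H0; lra. }
  assert (I2 : is_RInt G (u+b) (x+b) (c2*(x-u))).
  { eapply is_RInt_ext. 2: { replace (c2*(x-u)) with (scal ((x+b)-(u+b)) c2).
      apply (@is_RInt_const R_NormedModule). change (((x+b)-(u+b))*c2 = c2*(x-u)). ring. }
    intros y Hy. rewrite Rmin_left in Hy by lra. rewrite Rmax_right in Hy by lra.
    symmetry; apply H2; lra. }
  exact (is_RInt_Chasles _ _ _ _ _ _ (is_RInt_Chasles _ _ _ _ _ _ I1 I0) I2).
Qed.

Lemma rr_pos b : 0 < b -> 0 < rr b.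
Proof. intros; unfold rr; apply Rinv_0_lt_compat; lra. Qed.

Lemma info_eq b N xs m x : 0 < b ->
  info b N xs m x = RInt (fun y => rr b * ln (rr b / pY b N xs m y)) (x-b) (x+b).
Proof. intros Hb. unfold info. apply RInt_ext. intros y Hy.
  rewrite Rmin_left in Hy by lra. rewrite Rmax_right in Hy by lra.
  rewrite pN_hit by lra. reflexivity. Qed.

Lemma affine_from b N xs m u v M1 M0 M2 : 0 < b -> u <= v -> v <= u + 2*b -> 0 < M1 -> 0 < M2 ->
  (forall y, u - b < y < v - b -> pY b N xs m y = rr b * M1) ->
  (forall y, v - b < y < u + b -> pY b N xs m y = rr b * M0) ->
  (forall y, u + b < y < v + b -> pY b N xs m y = rr b * M2) ->
  affine_on (info b N xs m) u v (rr b * ln (M1 / M2)).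
Proof.
  intros Hb Huv Hvu HM1 HM2 H1 H0 H2.
  set (c1 := rr b * ln (rr b / (rr b * M1))).
  set (c0 := rr b * ln (rr b / (rr b * M0))).
  set (c2 := rr b * ln (rr b / (rr b * M2))).
  exists (c1*v + c0*(u+2*b-v) - c2*u). intros x Hx.
  rewrite info_eq by exact Hb.
  rewrite (affine_core _ b u v c1 c0 c2); try assumption.
  2: { intros y Hy. rewrite H1 by exact Hy. reflexivity. }
  2: { intros y Hy. rewrite H0 by exact Hy. reflexivity. }
  2: { intros y Hy. rewrite H2 by exact Hy. reflexivity. }
  assert (Hr := rr_pos b Hb).
  unfold c1, c2.
  replace (rr b / (rr b * M1)) with (/ M1) by (field; lra).
  replace (rr b / (rr b * M2)) with (/ M2) by (field; lra).
  rewrite !ln_Rinv, ln_div by lra. ring.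
Qed.

Lemma odd_S c : Nat.odd (S c) = negb (Nat.odd c).
Proof. unfold Nat.odd at 1. rewrite Nat.even_succ. reflexivity. Qed.

Lemma par_sep i c : Nat.odd i = Nat.odd c -> i <> c -> (i + 2 <= c \/ c + 2 <= i)%nat.
Proof.
  intros Hp Hn. destruct (Nat.eq_dec c (S i)) as [->|].
  { rewrite odd_S in Hp. destruct (Nat.odd i); discriminate. }
  destruct (Nat.eq_dec i (S c)) as [->|].
  { rewrite odd_S in Hp. destruct (Nat.odd c); discriminate. }
  lia.
Qed.

Lemma INR_gap i c : (i + 2 <= c \/ c + 2 <= i)%nat -> INR i + 2 <= INR c \/ INR c + 2 <= INR i.
Proof. intros [H|H]; [left|right]; apply le_INR in H; rewrite plus_INR in H; simpl in H; lra. Qed.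

Lemma nn_nat b k : rr b = INR k -> nn b = k.
Proof.
  intros H. unfold nn, Int_part. rewrite H.
  rewrite <- (tech_up (INR k) (Z.of_nat k + 1)).
  - rewrite Z.add_simpl_r. apply Nat2Z.id.
  - rewrite plus_IZR, <- INR_IZR_INZ. simpl. lra.
  - rewrite plus_IZR, <- INR_IZR_INZ. simpl. lra.
Qed.

Lemma xs_nat_eq b i : 0 < b -> is_natR (rr b) -> xs_nat b i = (INR i - 1) * (2*b).
Proof.
  intros Hb [k Hk]. unfold xs_nat. rewrite (nn_nat b k Hk), <- Hk. unfold rr. field. lra.
Qed.

Lemma pY_nat_cell b m c y : 0 < b -> is_natR (rr b) -> (1 <= c <= nn b + 1)%nat ->
  xs_nat b c - b < y < xs_nat b c + b ->
  pY b (nn b + 1) (xs_nat b) m y = rr b * m c.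
Proof.
  intros Hb Hn Hc Hy.
  rewrite (pY_two b (nn b + 1) (xs_nat b) m y c 0).
  - unfold mext. destruct (Nat.leb_spec 1 c); [|lia]. destruct (Nat.leb_spec c (nn b + 1)); [|lia].
    simpl. ring.
  - intros i Hi. unfold dlt. destruct (Nat.eqb_spec i 0); [lia|].
    destruct (Nat.eqb_spec i c).
    + subst. rewrite pN_hit by lra. ring.
    + rewrite pN_miss; [ring|].
      rewrite !xs_nat_eq in * by assumption.
      assert (G : (i + 1 <= c \/ c + 1 <= i)%nat) by lia.
      destruct G as [G|G]; apply le_INR in G; rewrite plus_INR in G; simpl in G; [right|left]; nra.
Qed.

Lemma nn_bounds b : 0 < b -> ~ is_natR (rr b) -> INR (nn b) < rr b < INR (nn b) + 1.
Proof.
  intros Hb Hn. assert (Hr := rr_pos b Hb).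
  destruct (base_Int_part (rr b)) as [H1 H2].
  assert (Hz : (0 <= Int_part (rr b))%Z).
  { apply Z.lt_succ_r. apply lt_IZR. rewrite succ_IZR. simpl. lra. }
  assert (E : INR (nn b) = IZR (Int_part (rr b))).
  { unfold nn. rewrite INR_IZR_INZ, Z2Nat.id by exact Hz. reflexivity. }
  rewrite E. split; [|lra].
  destruct H1 as [H1|H1]; [exact H1|].
  exfalso. apply Hn. exists (nn b). rewrite E. auto.
Qed.

Lemma xs_nonnat_eq b i : 0 < b -> xs_nonnat b i =
  if Nat.odd i then (INR i - 1) * b else 1 - (2 * INR (nn b) + 2 - INR i) * b.
Proof. intros Hb. unfold xs_nonnat, rr. destruct (Nat.odd i); field; lra. Qed.

Lemma Xa_step b i : 0 < b -> xs_nonnat b (i + 2) = xs_nonnat b i + 2 * b.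
Proof.
  intros Hb. rewrite !xs_nonnat_eq by exact Hb.
  replace (i + 2)%nat with (S (S i)) by lia.
  change (Nat.odd (S (S i))) with (Nat.odd i).
  rewrite !S_INR. destruct (Nat.odd i); ring.
Qed.

Lemma Xa_mono b i : 0 < b -> ~ is_natR (rr b) ->
  xs_nonnat b i <= xs_nonnat b (i + 1) <= xs_nonnat b i + 2 * b.
Proof.
  intros Hb Hn. destruct (nn_bounds b Hb Hn) as [B1 B2].
  assert (E : rr b * (2 * b) = 1) by (unfold rr; field; lra).
  assert (C1 : 2 * INR (nn b) * b < 1) by nra.
  assert (C2 : 1 < 2 * (INR (nn b) + 1) * b) by nra.
  rewrite !xs_nonnat_eq by exact Hb.
  replace (i + 1)%nat with (S i) by lia. rewrite odd_S, S_INR.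
  destruct (Nat.odd i); simpl; split; nra.
Qed.

Lemma Xa_sep b i c : 0 < b -> Nat.odd i = Nat.odd c -> i <> c ->
  xs_nonnat b i + 2 * b <= xs_nonnat b c \/ xs_nonnat b c + 2 * b <= xs_nonnat b i.
Proof.
  intros Hb Hp Hne. assert (G := INR_gap i c (par_sep i c Hp Hne)).
  rewrite !xs_nonnat_eq by exact Hb. rewrite Hp.
  destruct (Nat.odd c); destruct G; [left|right|left|right]; nra.
Qed.

Lemma pY_a b N m c d y : 0 < b -> d = (c + 1)%nat ->
  xs_nonnat b c - b < y < xs_nonnat b c + b ->
  xs_nonnat b d - b < y < xs_nonnat b d + b ->
  pY b N (xs_nonnat b) m y = rr b * (mext N m c + mext N m d).
Proof.
  intros Hb Hd Hy1 Hy2. apply pY_two. intros i Hi. unfold dlt.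
  destruct (Nat.eqb_spec i c); destruct (Nat.eqb_spec i d); try lia.
  - subst. rewrite pN_hit by lra. ring.
  - subst. rewrite pN_hit by lra. ring.
  - rewrite pN_miss; [ring|].
    destruct (Bool.bool_dec (Nat.odd i) (Nat.odd c)) as [Hp|Hp].
    + destruct (Xa_sep b i c Hb Hp n); lra.
    + assert (Hp' : Nat.odd i = Nat.odd d).
      { subst d. replace (c + 1)%nat with (S c) by lia. rewrite odd_S.
        destruct (Nat.odd i); destruct (Nat.odd c); simpl in *; congruence. }
      destruct (Xa_sep b i d Hb Hp' n0); lra.
Qed.

Theorem mainTheorem5 (b : R) (hb : 0 < b) (m : nat -> R) :
  (* (a) r not a natural number, N_r = 2n+2 *)
  (~ is_natR (rr b) ->
   (forall j, (1 <= j <= 2 * nn b + 2)%nat -> 0 <= m j) ->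
   sum1N (2 * nn b + 2) m = 1 ->
   (forall j, (1 <= j <= 2 * nn b + 3)%nat ->
      0 < mext (2 * nn b + 2) m (j - 1)%nat + mext (2 * nn b + 2) m j) ->
   forall j, (1 <= j <= 2 * nn b + 1)%nat ->
     affine_on (info b (2 * nn b + 2) (xs_nonnat b) m)
       (xs_nonnat b j) (xs_nonnat b (j + 1)%nat)
       (rr b * ln ((mext (2 * nn b + 2) m (j - 1)%nat + mext (2 * nn b + 2) m j)
                   / (mext (2 * nn b + 2) m (j + 1)%nat + mext (2 * nn b + 2) m (j + 2)%nat))))
  /\
  (* (b) r a natural number, N_r = n+1 *)
  (is_natR (rr b) ->
   (forall j, (1 <= j <= nn b + 1)%nat -> 0 < m j) ->
   sum1N (nn b + 1) m = 1 ->
   forall j, (1 <= j <= nn b)%nat ->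
     affine_on (info b (nn b + 1) (xs_nat b) m)
       (xs_nat b j) (xs_nat b (j + 1)%nat)
       (rr b * ln (m j / m (j + 1)%nat))).
Proof.
  split.
  - intros Hn _ _ Hpos j Hj.
    set (N := (2 * nn b + 2)%nat) in *.
    destruct j as [|k]; [lia|].
    replace (S k - 1)%nat with k by lia.
    replace (S k) with (k + 1)%nat by lia.
    replace (k + 1 + 1)%nat with (k + 2)%nat by lia.
    replace (k + 1 + 2)%nat with (k + 3)%nat by lia.
    assert (F1 := Xa_step b k hb).
    assert (F1' : xs_nonnat b (k + 3) = xs_nonnat b (k + 1) + 2 * b).
    { replace (k + 3)%nat with (k + 1 + 2)%nat by lia. apply Xa_step; exact hb. }
    assert (F2 := Xa_mono b k hb Hn).
    assert (F2' : xs_nonnat b (k + 1) <= xs_nonnat b (k + 2) <= xs_nonnat b (k + 1) + 2 * b).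
    { replace (k + 2)%nat with (k + 1 + 1)%nat by lia. apply Xa_mono; assumption. }
    apply (affine_from b N (xs_nonnat b) m _ _ _ (mext N m (k + 1) + mext N m (k + 2))); try lra.
    + assert (H := Hpos (k + 1)%nat ltac:(lia)). replace (k + 1 - 1)%nat with k in H by lia. exact H.
    + assert (H := Hpos (k + 3)%nat ltac:(lia)). replace (k + 3 - 1)%nat with (k + 2)%nat in H by lia. exact H.
    + intros y Hy. apply pY_a; [exact hb|reflexivity|lra|lra].
    + intros y Hy. apply pY_a; [exact hb|lia|lra|lra].
    + intros y Hy. apply pY_a; [exact hb|lia|lra|lra].
  - intros Hn Hpos _ j Hj.
    assert (E1 := xs_nat_eq b j hb Hn).
    assert (E2 := xs_nat_eq b (j + 1) hb Hn).
    rewrite plus_INR in E2. simpl in E2.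
    apply (affine_from b (nn b + 1) (xs_nat b) m _ _ _ 0); try lra.
    + apply Hpos; lia.
    + apply Hpos; lia.
    + intros y Hy. apply pY_nat_cell; try assumption; [lia|lra].
    + intros y Hy. lra.
    + intros y Hy. apply pY_nat_cell; try assumption; [lia|lra].
Qed.
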